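(* Let $n$ be a positive integer. The lattice $\widetilde\Pi(D_n)$ is modular if and only if $n$ is of one of the following forms: (1) $n=2^\alpha$ for some integer $\alpha\ge 0$; (2) $n=\prod_{i=1}^{k}p_i^{t_i}$ where $p_1,\dots,p_k$ are distinct odd primes and $t_1,\dots,t_k\ge 0$ are integers (i.e., $n$ is odd); (3) $n=2p^{\alpha}$ where $p$ is an odd prime and $\alpha\ge 1$.
   Context: For a positive integer $n$, $D_n=\langle r,s\mid r^n=e,\ s^2=e,\ srs^{-1}=r^{-1}\rangle$ is the dihedral group of order $2n$. For a finite group $G$ and a subgroup $H\le G$, let $\pi_e(H)=\{o(x)\mid x\in H\}$. Let $\mathcal{L}(G)$ be the set of subgroups of $G$; define $H_1\equiv H_2$ iff $\pi_e(H_1)=\pi_e(H_2)$, with class $[H]$. The poset $\widetilde\Pi(G)$ is $\mathcal{L}(G)/\!\equiv$ ordered by $[H_1]\lesssim[H_2]$ iff $\pi_e(H_1)\subseteq\pi_e(H_2)$; for $G=D_n$ it is a lattice. *)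

(* Defs.v *)
From mathcomp Require Import all_boot all_fingroup all_solvable.
Set Implicit Arguments. Unset Strict Implicit. Unset Printing Implicit Defensive.
Local Open Scope group_scope.

Section PiE.
Variable gT : finGroupType.

Definition pie (H : {set gT}) : seq nat := [seq #[x] | x in H].

(* [H1] <= [H2] in Pi~(G) iff pi_e(H1) is contained in pi_e(H2) *)
Definition pie_le (H K : {set gT}) : Prop := {subset pie H <= pie K}.
Definition pie_eq (H K : {set gT}) : Prop := pie_le H K /\ pie_le K H.

Definition pie_is_join (G A B J : {group gT}) : Prop :=
  [/\ J \subset G, pie_le A J, pie_le B J &
      forall W : {group gT}, W \subset G -> pie_le A W -> pie_le B W -> pie_le J W].

Definition pie_is_meet (G A B M : {group gT}) : Prop :=
  [/\ M \subset G, pie_le M A, pie_le M B &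
      forall W : {group gT}, W \subset G -> pie_le W A -> pie_le W B -> pie_le W M].

Definition pie_lattice (G : {group gT}) : Prop :=
  forall A B : {group gT}, A \subset G -> B \subset G ->
    (exists J : {group gT}, pie_is_join G A B J) /\
    (exists M : {group gT}, pie_is_meet G A B M).

(* Pi~(G) is a modular lattice:
   [A] <= [C] -> [A] \/ ([B] /\ [C]) = ([A] \/ [B]) /\ [C] *)
Definition pie_modular (G : {group gT}) : Prop :=
  pie_lattice G /\
  forall A B C : {group gT}, A \subset G -> B \subset G -> C \subset G ->
    pie_le A C ->
    forall M J1 J2 M2 : {group gT},
      pie_is_meet G B C M -> pie_is_join G A M J1 ->
      pie_is_join G A B J2 -> pie_is_meet G J2 C M2 ->
      pie_eq J1 M2.
End PiE.

(* Main.v *)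
Require Import Defs.
From mathcomp Require Import all_boot all_fingroup all_solvable.
From mathcomp Require order.
From mathcomp Require Import zmodp zify.
From Stdlib Require Import Classical.
Set Implicit Arguments. Unset Strict Implicit. Unset Printing Implicit Defensive.

Lemma dvd2E d : (d %| 2) = (d == 1) || (d == 2).
Proof. by case: d => [|[|[|d]]] //; rewrite dvdn_divisors. Qed.

Definition gnorm g := if g == 2 then 1 else g.

Lemma gnorm_dvd g : gnorm g %| g.
Proof. by rewrite /gnorm; case: eqP => // _; apply: dvd1n. Qed.

Definition Pn n := forall a b, a %| n -> b %| n -> a != 2 -> b != 2 -> gcdn a b != 2.

Definition condn n := [\/ exists a : nat, n = (2 ^ a)%N,
      odd n
    | exists p a : nat, [/\ prime p, odd p, 0 < a & n = (2 * p ^ a)%N]].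

Lemma cond_P n : 0 < n -> condn n -> Pn n.
Proof.
move=> n0 [[a ->]|on|[p [a [pp op a0 ->]]]] x y xn yn x2 y2; apply/eqP => g2.
- have hx : 2 %| x by rewrite -g2 dvdn_gcdl.
  have hy : 2 %| y by rewrite -g2 dvdn_gcdr.
  have h4 : forall z, z %| 2 ^ a -> z != 2 -> 2 %| z -> 4 %| z.
    move=> z /(dvdn_pfactor _ _ (isT : prime 2)) [i _ ->] z2 z22.
    case: i z2 z22 => [|[|i]] //= _ _; by rewrite !expnS mulnA (dvdn_mulr _ (dvdnn 4)).
  have := dvdn_gcd 4 x y; rewrite g2 (h4 x) ?(h4 y) //.
- have : 2 %| n by rewrite (dvdn_trans _ xn) // -g2 dvdn_gcdl.
  by rewrite dvdn2 on.
- have hp : forall z, z %| 2 * p ^ a -> z != 2 -> 2 %| z -> p %| z.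
    move=> z zn z2 /dvdnP [k kz]; subst z.
    move: zn; rewrite mulnC dvdn_pmul2l // => /(dvdn_pfactor _ _ pp) [i _ ki].
    case: i ki => [|i] ki; first by move: z2; rewrite ki.
    rewrite ki; apply: dvdn_mull; exact: dvdn_exp (ltn0Sn i) (dvdnn p).
  have hx : 2 %| x by rewrite -g2 dvdn_gcdl.
  have hy : 2 %| y by rewrite -g2 dvdn_gcdr.
  have := dvdn_gcd p x y; rewrite g2 (hp x) ?(hp y) //= dvd2E.
  case/orP=> /eqP pe; first by rewrite pe in pp.
  by rewrite pe in op.
Qed.

Lemma notcond_P n : 0 < n -> ~ condn n ->
  exists b c c', [/\ b %| n, c %| n, b != 2, c != 2 & gcdn b c = 2] /\
    [/\ c = 2 * c', odd c' & c' != 1].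
Proof.
move=> n0 nc.
have oddp : forall p, prime p -> p != 2 -> odd p.
  by move=> p pp p2; case: (even_prime pp) => // p2'; rewrite p2' in p2.
have ne : ~~ odd n by apply/negP => on; apply: nc; apply: Or32.
have n2 : 2 %| n by rewrite dvdn2.
have [/dvdnP [k nk] | n4] := boolP (4 %| n).
  have [p [pp pn p2]] : exists p, [/\ prime p, p %| n & p != 2].
    apply: NNPP => H; apply: nc; apply: Or31; exists (logn 2 n).
    rewrite -p_part part_pnat_id //; apply/pnatP => // q qp qn.
    rewrite inE; apply/negPn/negP => q2; apply: H; by exists q.
  have op := oddp p pp p2.
  exists 4, (2 * p), p; split; split => //.
  - by rewrite nk dvdn_mull.
  - by rewrite Gauss_dvd ?coprime2n // n2.
  - by have := prime_gt1 pp; lia.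
  - rewrite -[4]/(2 * 2) -muln_gcdr; have := coprime2n p; rewrite op /coprime => /eqP ->.
    by [].
  - by apply/eqP => p1; rewrite p1 in pp.
have [o no] : exists o, n = 2 * o by case/dvdnP: n2 => o ->; exists o; rewrite mulnC.
have oo : odd o.
  apply: contraNT n4 => eo; by rewrite no -[4]/(2 * 2) dvdn_pmul2l // dvdn2.
have o1 : 1 < o.
  case: o no oo => [|[|o]] // no' _.
  case: nc; apply: Or31; exists 1; by rewrite no'.
set p := pdiv o.
have pp : prime p by apply: pdiv_prime.
have po : p %| o by apply: pdiv_dvd.
have op : odd p.
  apply: oddp => //; apply/eqP => p2; move: oo; rewrite -[odd o]negbK -dvdn2 -p2 po.
  by [].
have [q [qp qo qne]] : exists q, [/\ prime q, q %| o & q != p].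
  apply: NNPP => H; apply: nc; apply: Or33; exists p, (logn p o); split => //.
    by rewrite logn_gt0 mem_primes pp po (ltnW o1).
  have H' : o = p ^ logn p o.
    rewrite -p_part part_pnat_id //; apply/pnatP; first by apply: ltnW.
    move=> r rp ro; rewrite inE; apply/negPn/negP => rne; apply: H; by exists r.
  by rewrite no {1}H'.
exists (2 * q), (2 * p), p; split; split => //.
- by rewrite no dvdn_pmul2l.
- by rewrite no dvdn_pmul2l.
- by have := prime_gt1 qp; lia.
- by have := prime_gt1 pp; lia.
- rewrite -muln_gcdr.
  have : coprime q p by rewrite prime_coprime // dvdn_prime2 //.
  by rewrite /coprime => /eqP ->.
- by apply/eqP => p1; rewrite p1 in pp.
Qed.

Local Open Scope group_scope.

Section Dih.
Variables (gT : finGroupType) (G : {group gT}) (n : nat) (r s : gT).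
Hypotheses (Gr : r \in G) (Gs : s \in G) (or : #[r] = n) (sNr : s \notin <[r]>)
  (inv2 : forall x, x \in G -> x \notin <[r]> -> #[x] = 2%N)
  (rs : forall a, a \in <[r]> -> a ^ s = a^-1).

Lemma pieP (W : {group gT}) : W \subset G -> forall d,
  (d \in pie W) = (d %| #|W :&: <[r]>|)%N || ((d == 2%N) && ~~ (W \subset <[r]>)).
Proof.
move=> sWG d; apply/imageP/idP.
  case=> x Wx ->; case: (boolP (x \in <[r]>)) => xr.
    by rewrite order_dvdG // inE Wx xr.
  have -> : ~~ (W \subset <[r]>) by apply/subsetPn; exists x.
  by rewrite inv2 ?(subsetP sWG) // eqxx orbT.
case/orP.
  move=> dk.
  have : cyclic (W :&: <[r]>) by apply: cyclicS (subsetIr _ _) (cycle_cyclic r).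
  case/cyclicP=> y defy.
  have Wy : y \in W.
    have : y \in W :&: <[r]> by rewrite defy cycle_id.
    by rewrite inE => /andP[].
  have oy : #[y] = #|W :&: <[r]>| by rewrite defy orderE.
  rewrite -oy in dk.
  have d0 : (0 < d)%N by apply: dvdn_gt0 dk.
  exists (y ^+ (#[y] %/ d)); first exact: groupX.
  rewrite orderXdiv ?dvdn_div // divnA // mulKn //.
case/andP=> /eqP -> /subsetPn [x Wx xr]; exists x => //.
by rewrite inv2 ?(subsetP sWG).
Qed.


Definition rep (W : {set gT}) m c :=
  [/\ forall d, (d \in pie W) = (d %| m)%N || ((d == 2%N) && c), m != 2%N,
      (2 %| m)%N ==> c & (m %| n)%N].

Lemma rep_le (A B : {set gT}) a ca b cb : rep A a ca -> rep B b cb ->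
  pie_le A B <-> (a %| b)%N && (ca ==> cb).
Proof.
move=> [hA a2 ha an] [hB b2 hb bn]; split => [le|].
  have : a \in pie B by apply: le; rewrite hA dvdnn.
  rewrite hB => /orP [ab|/andP[/eqP a2' _]]; last by rewrite a2' in a2.
  rewrite ab /=; apply/implyP => cA.
  have : 2%N \in pie B by apply: le; rewrite hA eqxx cA orbT.
  by rewrite hB => /orP[h|/andP[_ ->]] //; exact: (implyP hb h).
case/andP => ab cab d; rewrite hA hB => /orP[da|/andP[d2 hca]].
  by rewrite (dvdn_trans da ab).
by rewrite d2 (implyP cab hca) orbT.
Qed.

Lemma n_gt0 : (0 < n)%N.
Proof. by rewrite -or order_gt0. Qed.

Lemma rep_ex (W : {group gT}) : W \subset G -> exists m c, rep W m c.
Proof.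
move=> sWG.
have kn : (#|W :&: <[r]>| %| n)%N by rewrite -or orderE cardSg // subsetIr.
have hP := pieP sWG.
set k := #|W :&: <[r]>| in kn hP.
set b := ~~ (W \subset <[r]>) in hP.
have [k2|k2] := eqVneq k 2%N.
  exists 1%N, true; split => //.
  move=> d; rewrite hP k2 dvd2E dvdn1.
  by case: (d == 1%N); case: (d == 2%N).
exists k, (b || (2 %| k)%N); split => //; last by apply/implyP => ->; rewrite orbT.
move=> d; rewrite hP; case dk: (d %| k)%N => //=.
case: (d =P 2%N) => //= d2; by rewrite -d2 dk orbF.
Qed.

Lemma real m c : (m %| n)%N ->
  exists2 W : {group gT}, W \subset G & forall d, (d \in pie W) = (d %| m)%N || ((d == 2%N) && c).
Proof.
move=> mn.
have m0 : (0 < m)%N by apply: dvdn_gt0 n_gt0 mn.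
set t := r ^+ (n %/ m).
have ot : #[t] = m by rewrite /t orderXdiv or ?dvdn_div // divnA // mulKn // n_gt0.
have tr : <[t]> \subset <[r]> by rewrite cycle_subG mem_cycle.
have tG : <[t]> \subset G by rewrite cycle_subG groupX.
case: c.
  have ns : <[s]> \subset 'N(<[t]>) by rewrite norms_cycle rs ?groupV ?cycle_id // mem_cycle.
  have sG : <[s]> \subset G by rewrite cycle_subG.
  have WG : (<[t]> <*> <[s]>)%G \subset G by rewrite join_subG tG sG.
  exists (<[t]> <*> <[s]>)%G => // d.
  rewrite (pieP WG) /= norm_joinEr // -group_modl //.
  have os : #[s] = 2%N by apply: inv2.
  rewrite (prime_TIg (G := <[s]>%G)) /= ?mulg1 -?orderE ?os ?ot //; last by rewrite cycle_subG.
  suff -> : ~~ (<[t]> * <[s]> \subset <[r]>) by [].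
  apply/subsetPn; exists s => //; rewrite -norm_joinEr // mem_gen // inE cycle_id orbT.
  by [].
exists (cycle_group t) => // d.
rewrite (pieP tG) /= tr (setIidPl tr) -orderE ot /=.
by rewrite andbF orbF.
Qed.

Lemma real_rep m c : (m %| n)%N -> m != 2%N -> (2 %| m)%N ==> c ->
  exists2 W : {group gT}, W \subset G & rep W m c.
Proof. by move=> mn m2 hc; have [W WG hW] := real c mn; exists W. Qed.

Lemma meet_rep (B C M : {group gT}) b cb c cc : rep B b cb -> rep C c cc ->
  rep M (gnorm (gcdn b c)) (cb && cc) -> M \subset G -> pie_is_meet G B C M.
Proof.
move=> hB hC hM sM; split => //.
- rewrite (rep_le hM hB) (dvdn_trans (gnorm_dvd _) (dvdn_gcdl _ _)) /=.
  by case: (cb); case: (cc).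
- rewrite (rep_le hM hC) (dvdn_trans (gnorm_dvd _) (dvdn_gcdr _ _)) /=.
  by case: (cb); case: (cc).
move=> W sWG lb lc; have [w [cw hW]] := rep_ex sWG.
move: lb lc; rewrite (rep_le hW hB) (rep_le hW hC) (rep_le hW hM).
case/andP=> wb wcb /andP[wc wcc]; apply/andP; split; last first.
  by move: wcb wcc; case: (cw); case: (cb); case: (cc).
have wg : (w %| gcdn b c)%N by rewrite dvdn_gcd wb wc.
rewrite /gnorm; case: eqP => [g2|] //; move: wg; rewrite g2 dvd2E.
by case: hW => _ w2 _ _; rewrite (negbTE w2) orbF => /eqP->.
Qed.

Lemma join_rep (A B J : {group gT}) a ca b cb : rep A a ca -> rep B b cb ->
  rep J (lcmn a b) (ca || cb) -> J \subset G -> pie_is_join G A B J.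
Proof.
move=> hA hB hJ sJ; split => //.
- rewrite (rep_le hA hJ) dvdn_lcml /=; by case: (ca); case: (cb).
- rewrite (rep_le hB hJ) dvdn_lcmr /=; by case: (ca); case: (cb).
move=> W sWG la lb; have [w [cw hW]] := rep_ex sWG.
move: la lb; rewrite (rep_le hA hW) (rep_le hB hW) (rep_le hJ hW).
case/andP=> aw caw /andP[bw cbw]; rewrite dvdn_lcm aw bw /=.
by move: caw cbw; case: (cw); case: (ca); case: (cb).
Qed.

Lemma meet_real (B C : {group gT}) b cb c cc : rep B b cb -> rep C c cc ->
  exists2 M : {group gT}, M \subset G & rep M (gnorm (gcdn b c)) (cb && cc).
Proof.
move=> [_ _ hb bn] [_ _ hc cn]; apply: real_rep.
- exact: dvdn_trans (gnorm_dvd _) (dvdn_trans (dvdn_gcdl _ _) bn).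
- by rewrite /gnorm; case: ifP => // /negbT.
rewrite /gnorm; case: ifP => // _; apply/implyP => h2.
by rewrite (implyP hb) ?(implyP hc) // (dvdn_trans h2) ?dvdn_gcdl ?dvdn_gcdr.
Qed.

Lemma join_real (A B : {group gT}) a ca b cb : rep A a ca -> rep B b cb ->
  exists2 J : {group gT}, J \subset G & rep J (lcmn a b) (ca || cb).
Proof.
move=> [_ a2 ha an] [_ b2 hb bn]; apply: real_rep.
- by rewrite dvdn_lcm an bn.
- apply/eqP => l2.
  have : (a %| 2)%N by rewrite -l2 dvdn_lcml.
  have : (b %| 2)%N by rewrite -l2 dvdn_lcmr.
  rewrite !dvd2E (negbTE a2) (negbTE b2) !orbF => /eqP b1 /eqP a1.
  by move: l2; rewrite a1 b1.
apply/implyP => h2.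
have : (2 %| a * b)%N by rewrite (dvdn_trans h2) // dvdn_lcm dvdn_mulr ?dvdn_mull.
rewrite Euclid_dvdM // => /orP[h|h].
  by rewrite (implyP ha h).
by rewrite (implyP hb h) orbT.
Qed.

Lemma meet_uniq (B C M : {group gT}) b cb c cc m cm :
  rep B b cb -> rep C c cc -> rep M m cm -> pie_is_meet G B C M ->
  m = gnorm (gcdn b c) /\ cm = cb && cc.
Proof.
move=> hB hC hM mM; have [M' sM' hM'] := meet_real hB hC.
have mM' := meet_rep hB hC hM' sM'.
case: mM => sM lMB lMC uM; case: mM' => _ lB lC uM'.
have := uM' M sM lMB lMC; have := uM M' sM' lB lC.
rewrite (rep_le hM hM') (rep_le hM' hM) => /andP[d1 i1] /andP[d2 i2].
split; first by apply/eqP; rewrite eqn_dvd d1 d2.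
by move: i1 i2; case: (cm); case: (cb && cc).
Qed.

Lemma join_uniq (A B J : {group gT}) a ca b cb j cj :
  rep A a ca -> rep B b cb -> rep J j cj -> pie_is_join G A B J ->
  j = lcmn a b /\ cj = ca || cb.
Proof.
move=> hA hB hJ jJ; have [J' sJ' hJ'] := join_real hA hB.
have jJ' := join_rep hA hB hJ' sJ'.
case: jJ => sJ lAJ lBJ uJ; case: jJ' => _ lA lB uJ'.
have := uJ' J sJ lAJ lBJ; have := uJ J' sJ' lA lB.
rewrite (rep_le hJ hJ') (rep_le hJ' hJ) => /andP[d1 i1] /andP[d2 i2].
split; first by apply/eqP; rewrite eqn_dvd d1 d2.
by move: i1 i2; case: (cj); case: (ca || cb).
Qed.

Lemma lattice : pie_lattice G.
Proof.
move=> A B sA sB; have [a [ca hA]] := rep_ex sA; have [b [cb hB]] := rep_ex sB.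
split.
  have [J sJ hJ] := join_real hA hB; exists J; exact: join_rep hJ sJ.
have [M sM hM] := meet_real hA hB; exists M; exact: meet_rep hM sM.
Qed.

Lemma meet_sub (B C M : {group gT}) : pie_is_meet G B C M -> M \subset G.
Proof. by case. Qed.
Lemma join_sub (B C M : {group gT}) : pie_is_join G B C M -> M \subset G.
Proof. by case. Qed.

Lemma modular_of_P : Pn n -> pie_modular G.
Proof.
move=> P; split; first exact: lattice.
move=> A B C sA sB sC leAC M J1 J2 M2 mM jJ1 jJ2 mM2.
have [a [ca hA]] := rep_ex sA; have [b [cb hB]] := rep_ex sB.
have [c [cc hC]] := rep_ex sC.
have [m [cm hM]] := rep_ex (meet_sub mM); have [j1 [cj1 hJ1]] := rep_ex (join_sub jJ1).
have [j2 [cj2 hJ2]] := rep_ex (join_sub jJ2); have [m2 [cm2 hM2]] := rep_ex (meet_sub mM2).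
have [em ecm] := meet_uniq hB hC hM mM.
have [ej1 ecj1] := join_uniq hA hM hJ1 jJ1.
have [ej2 ecj2] := join_uniq hA hB hJ2 jJ2.
have [em2 ecm2] := meet_uniq hJ2 hC hM2 mM2.
move: leAC; rewrite (rep_le hA hC) => /andP[ac cac].
have gn : forall x y (hx : (x %| n)%N) (hy : (y %| n)%N), x != 2%N -> y != 2%N ->
    gnorm (gcdn x y) = gcdn x y.
  by move=> x y hx hy x2 y2; rewrite /gnorm (negbTE (P x y hx hy x2 y2)).
case: hB => _ b2 _ bn; case: hC => _ c2 _ cn; case: (hJ2) => _ j22 _ j2n.
have e1 : j1 = m2.
  by rewrite ej1 em2 em !gn // ej2 order.Order.NatDvd.meetUl (gcdn_idPl ac).
have e2 : cj1 = cm2.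
  rewrite ecj1 ecm2 ecm ecj2; by move: cac; case: (ca); case: (cb); case: (cc).
split; [apply/(rep_le hJ1 hM2) | apply/(rep_le hM2 hJ1)];
  by rewrite e1 e2 dvdnn implybb.
Qed.

Lemma notmod_of_notP : (exists b c c', [/\ (b %| n)%N, (c %| n)%N, b != 2%N, c != 2%N & gcdn b c = 2%N] /\
    [/\ c = (2 * c')%N, odd c' & c' != 1%N]) -> ~ pie_modular G.
Proof.
move=> [b [c [c' [[bn cn b2 c2 g2] [cc' oc' c1]]]]] [_ modH].
have c'n : (c' %| n)%N by rewrite (dvdn_trans _ cn) // cc' dvdn_mull.
have c'2 : c' != 2%N by apply/eqP => e; rewrite e in oc'.
have [A sA hA] := real_rep (c := true) c'n c'2 (implybT _).
have [B sB hB] := real_rep (c := true) bn b2 (implybT _).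
have [C sC hC] := real_rep (c := true) cn c2 (implybT _).
have [M sM hM] := meet_real hB hC.
have [J1 sJ1 hJ1] := join_real hA hM.
have [J2 sJ2 hJ2] := join_real hA hB.
have [M2 sM2 hM2] := meet_real hJ2 hC.
have leAC : pie_le A C by rewrite (rep_le hA hC) cc' dvdn_mull.
have [_ h] := modH A B C sA sB sC leAC M J1 J2 M2 (meet_rep hB hC hM sM)
  (join_rep hA hM hJ1 sJ1) (join_rep hA hB hJ2 sJ2) (meet_rep hJ2 hC hM2 sM2).
move: h; rewrite (rep_le hM2 hJ1) => /andP[+ _].
have lc : lcmn c' 2 = c.
  apply/eqP; rewrite eqn_dvd dvdn_lcm cc' dvdn_mull ?dvdn_mulr //=.
  by rewrite Gauss_dvd ?coprime2n // dvdn_lcml dvdn_lcmr.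
rewrite g2 /gnorm eqxx lcmn1 order.Order.NatDvd.meetUl (gcdn_idPl _); last by rewrite cc' dvdn_mull.
rewrite g2 lc (negbTE c2) cc'.
have c'0 : (0 < c')%N by case: (c') oc'.
move/(dvdn_leq c'0); lia.
Qed.

End Dih.

Lemma dih_setup n (gT : finGroupType) (G : {group gT}) : (0 < n)%N ->
  G \isog Grp (r : s : r ^+ n, s ^+ 2, r ^ s = r^-1) ->
  exists r s, [/\ r \in G, s \in G, #[r] = n & s \notin <[r]>] /\
   ((forall x, x \in G -> x \notin <[r]> -> #[x] = 2%N) /\
    (forall a, a \in <[r]> -> a ^ s = a^-1)).
Proof.
move=> n0 iso.
have /existsP [[x y] /= /eqP [defG xn y2 xy]] := isoGrp_hom iso.
have lb : (n.*2 <= #|G|)%N.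
  have [n1|n1] := ltnP 1 n.
    have h : ('D_(n.*2))%G \homg G by rewrite iso; exact: isoGrp_hom (Grp_dihedral n1).
    by have := card_homg h; rewrite card_dihedral // => /dvdn_leq -> //.
  have -> : n = 1%N by lia.
  have h : [set: 'Z_2]%G \homg G.
    rewrite iso; apply/existsP; exists (1, Zp1) => /=; rewrite !xpair_eqE /=.
    rewrite cycle1 joing1G eqEcard subsetT cardsT card_ord -orderE order_Zp1 /= expg1n eqxx /=.
    by rewrite conj1g invg1.
  by have := card_homg h; rewrite cardsT card_ord => /dvdn_leq -> //.
have ns : <[y]> \subset 'N(<[x]>) by rewrite norms_cycle xy groupV cycle_id.
have defG' : G :=: <[x]> * <[y]> by rewrite -defG norm_joinEr.
have hc := mul_cardG <[x]> <[y]>.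
have ox : (#[x] <= n)%N by apply: dvdn_leq => //; rewrite order_dvdn xn.
have oy : (#[y] <= 2)%N by apply: dvdn_leq => //; rewrite order_dvdn y2.
have k0 : (0 < #|<[x]> :&: <[y]>|)%N by apply: cardG_gt0.
rewrite -!orderE -defG' in hc.
have h1 : (#[x] * #[y] <= n * 2)%N by apply: leq_mul.
rewrite -mul2n in lb.
have [ex ey ek] : [/\ #[x] = n, #[y] = 2%N & #|<[x]> :&: <[y]>| = 1%N].
  move: hc h1 lb ox oy k0; move: #[x] #[y] #|<[x]> :&: <[y]>| #|G| => X Y K g.
  move=> hc h1 lb ox oy k0.
  have K1 : K = 1%N by nia.
  subst K; rewrite muln1 in hc; subst g.
  have : X = n by nia.
  move=> XE; subst X; split => //; nia.
have TI : <[x]> :&: <[y]> = 1.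
  by apply: cardMg_TI; rewrite -!orderE -defG' hc ek muln1.
have Gx : x \in G by rewrite -defG mem_gen // inE cycle_id.
have Gy : y \in G by rewrite -defG mem_gen // inE cycle_id orbT.
have yNx : y \notin <[x]>.
  apply/negP => yx; have : y \in <[x]> :&: <[y]> by rewrite inE yx cycle_id.
  by rewrite TI => /set1P y1; move: ey; rewrite y1 order1.
have conjx : forall a, a \in <[x]> -> a ^ y = a^-1.
  by move=> a /cycleP [i ->]; rewrite conjXg xy expVgn.
exists x, y; split; first by split.
split => // z; rewrite defG' => /mulsgP [a b ax]; rewrite cycle2g // => /set2P [->|->] -> zx.
  by rewrite mulg1 ax in zx.
have yV : y^-1 = y by apply/eqP; rewrite eq_invg_mul -[y * y]/(y ^+ 2) y2.
have z2 : (a * y) ^+ 2 = 1.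
  rewrite expgS expg1 -mulgA (mulgA y) -{1}yV -mulgA -/(conjg a y) conjx //.
  by rewrite mulgV.
have : (#[a * y] %| 2)%N by rewrite order_dvdn z2.
rewrite dvd2E => /orP [/eqP o1|/eqP //].
move/eqP: o1; rewrite order_eq1 => /eqP e; by rewrite e group1 in zx.
Qed.

Theorem theorem2p10 (n : nat) (gT : finGroupType) (G : {group gT}) :
  0 < n ->
  G \isog Grp (r : s : r ^+ n, s ^+ 2, r ^ s = r^-1) ->
  pie_modular G <->
  [\/ exists a : nat, n = (2 ^ a)%N,
      odd n
    | exists p a : nat, [/\ prime p, odd p, 0 < a & n = (2 * p ^ a)%N]].
Proof.
move=> n0 iso.
have [r [s [[Gr Gs or sNr] [inv2 rs]]]] := dih_setup n0 iso.
split.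
  move=> modG; apply: NNPP => nc.
  exact: (notmod_of_notP Gr Gs or sNr inv2 rs (notcond_P n0 nc)) modG.
move=> c; exact: (modular_of_P Gr Gs or sNr inv2 rs (cond_P n0 c)).
Qed.
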